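(* Let $A,C\in\mathbb{C}^{n\times n}$ be Hermitian positive semidefinite. Then $\|I+AC\|\ge 1$, and equality holds if and only if $AC=0$.
   Context: $\|\cdot\|$ is the spectral (operator) norm. *)

(* Defs.v *)
From HB Require Import structures.
From mathcomp Require Import all_boot all_order all_algebra.
From mathcomp Require Import complex.
From mathcomp Require Import classical_sets reals.
Set Implicit Arguments. Unset Strict Implicit. Unset Printing Implicit Defensive.
Import Order.TTheory GRing.Theory Num.Theory.
Local Open Scope ring_scope.
Local Open Scope classical_set_scope.

Definition ctrmx {R : realType} m n (M : 'M[R[i]]_(m, n)) : 'M[R[i]]_(n, m) :=
  (map_mx conjc M)^T.

Definition hermitian {R : realType} n (M : 'M[R[i]]_n) : Prop := ctrmx M = M.

(* Hermitian positive semidefinite: Hermitian and x^* M x >= 0 for all x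
   (the order on R[i] is the canonical one: 0 <= z iff z is real and >= 0). *)
Definition psd {R : realType} n (M : 'M[R[i]]_n) : Prop :=
  hermitian M /\ forall x : 'cV[R[i]]_n, 0 <= (ctrmx x *m M *m x) 0 0.

Definition vnorm {R : realType} n (x : 'cV[R[i]]_n) : R :=
  Num.sqrt (\sum_(i < n) (complex.Re (x i 0) ^+ 2 + complex.Im (x i 0) ^+ 2)).

Definition spnorm {R : realType} n (M : 'M[R[i]]_n) : R :=
  sup [set vnorm (M *m x) | x in [set x : 'cV[R[i]]_n | vnorm x <= 1]].

(* Main.v *)
Require Import Defs.
From HB Require Import structures.
From mathcomp Require Import all_boot all_order all_algebra.
From mathcomp Require Import complex.
From mathcomp Require Import classical_sets reals.
From mathcomp Require Import spectral ring lra.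
Import Order.TTheory GRing.Theory Num.Theory.
Local Open Scope ring_scope.

Section S.
Variable R : realType.
Local Notation C := (R[i]).
Local Notation Re := complex.Re.
Local Notation Im := complex.Im.

Lemma ctrmxE m n (M : 'M[C]_(m,n)) : ctrmx M = (M ^t* )%sesqui.
Proof. by rewrite /ctrmx map_trmx. Qed.

Lemma psd_conj n (A : 'M[C]_n) (P : 'M[C]_n) k :
  psd A -> 0 <= (P *m A *m (P ^t* )%sesqui) k k.
Proof.
move=> [_ hA]; have := hA (ctrmx (row k P)).
suff -> : (ctrmx (ctrmx (row k P)) *m A *m ctrmx (row k P)) 0 0
   = (P *m A *m (P ^t* )%sesqui) k k by [].
rewrite !mxE; apply: eq_bigr => j _; rewrite !mxE; congr (_ * _).
  apply: eq_bigr => l _; rewrite !mxE /=.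
  by congr (_ * _); case: (P k l) => a b /=; rewrite opprK.
Qed.

Lemma tr_psd n (A B : 'M[C]_n) : psd A -> psd B -> 0 <= \tr (A *m B).
Proof.
move=> hA hB.
have nB : B \is normalmx.
  by apply/normalmxP; have [hB' _] := hB; move: hB'; rewrite /Defs.hermitian ctrmxE => ->.
have Bu := spectral_unitarymx B.
have /orthomx_spectralP eB := nB.
set P := spectralmx B in eB Bu; set d := spectral_diag B in eB.
have PP : P *m (P ^t* )%sesqui = 1%:M by apply/unitarymxP.
have dE k : d 0 k = (P *m B *m (P ^t* )%sesqui) k k.
  rewrite eB invmx_unitary // !mulmxA PP mul1mx -mulmxA PP mulmx1.
  by rewrite mxE eqxx mulr1n.
rewrite eB invmx_unitary // !mulmxA mxtrace_mulC !mulmxA.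
rewrite mul_mx_diag /mxtrace.
apply: sumr_ge0 => k _; rewrite mxE.
by apply: mulr_ge0; [apply: psd_conj | rewrite dE; apply: psd_conj].
Qed.

Lemma ReM (a b : C) : Re (a * b) = Re a * Re b - Im a * Im b.
Proof. by case: a => ? ?; case: b. Qed.
Lemma ImM (a b : C) : Im (a * b) = Re a * Im b + Im a * Re b.
Proof. by case: a => ? ?; case: b. Qed.

Lemma normRe_mul (a z : C) : `|Re z| <= 1 -> `|Im z| <= 1 ->
  `|Re (a * z)| <= `|Re a| + `|Im a|.
Proof.
move=> h1 h2; rewrite ReM; apply: (le_trans (ler_normB _ _)).
rewrite !normrM; apply: lerD.
  by rewrite -[leRHS]mulr1; apply: ler_wpM2l.
by rewrite -[leRHS]mulr1; apply: ler_wpM2l.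
Qed.
Lemma normIm_mul (a z : C) : `|Re z| <= 1 -> `|Im z| <= 1 ->
  `|Im (a * z)| <= `|Re a| + `|Im a|.
Proof.
move=> h1 h2; rewrite ImM; apply: (le_trans (ler_normD _ _)).
rewrite !normrM; apply: lerD.
  by rewrite -[leRHS]mulr1; apply: ler_wpM2l.
by rewrite -[leRHS]mulr1; apply: ler_wpM2l.
Qed.

Lemma le_sum_term (I : finType) (F : I -> R) j : (forall i, 0 <= F i) -> F j <= \sum_i F i.
Proof. by move=> h; rewrite (bigD1 j) //= lerDl sumr_ge0. Qed.

Lemma sq_le (u b : R) : `|u| <= b -> u ^+ 2 <= b ^+ 2.
Proof.
move=> h; rewrite -real_normK ?num_real //.
apply: lerXn2r => //; rewrite ?qualifE /= ?normr_ge0 //.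
exact: le_trans (normr_ge0 u) h.
Qed.

Lemma abs_le1 (u : R) : u ^+ 2 <= 1 -> `|u| <= 1.
Proof. by rewrite -real_normK ?num_real // expr_le1. Qed.

Definition sq {n} (x : 'cV[C]_n) := \sum_i (Re (x i 0) ^+ 2 + Im (x i 0) ^+ 2).
Lemma sq_ge0 n (x : 'cV[C]_n) : 0 <= sq x.
Proof. by apply: sumr_ge0 => i _; rewrite addr_ge0 // sqr_ge0. Qed.
Lemma vnormE n (x : 'cV[C]_n) : vnorm x = Num.sqrt (sq x).
Proof. by []. Qed.

Lemma bounded n (M : 'M[C]_n) : exists K, forall x : 'cV[C]_n, vnorm x <= 1 -> vnorm (M *m x) <= K.
Proof.
pose b i := \sum_j (`|Re (M i j)| + `|Im (M i j)|).
exists (Num.sqrt (\sum_i (b i ^+ 2 + b i ^+ 2))) => x; rewrite !vnormE => hx.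
apply: ler_wsqrtr.
have hx1 : sq x <= 1 by rewrite -(ler_sqrt _ ler01) sqrtr1.
pose F i := Re (x i 0) ^+ 2 + Im (x i 0) ^+ 2.
have hF i : 0 <= F i by rewrite /F addr_ge0 // sqr_ge0.
have hre j : `|Re (x j 0)| <= 1.
  apply: abs_le1; apply: (le_trans _ hx1).
  have H := le_sum_term _ F j hF.
  apply: (le_trans _ H).
  by rewrite /F lerDl sqr_ge0.
have him j : `|Im (x j 0)| <= 1.
  apply: abs_le1; apply: (le_trans _ hx1).
  apply: (le_trans _ (le_sum_term _ F j hF)).
  by rewrite /F lerDr sqr_ge0.
apply: ler_sum => i _; rewrite mxE raddf_sum [Im _]raddf_sum.
apply: lerD; apply: sq_le; apply: (le_trans (ler_norm_sum _ _ _));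
  apply: ler_sum => j _.
  exact: normRe_mul.
exact: normIm_mul.
Qed.
Lemma sq_col n (M : 'M[C]_n) j : sq (M *m delta_mx j 0) = \sum_i (Re (M i j) ^+ 2 + Im (M i j) ^+ 2).
Proof. by rewrite /sq -colE; apply: eq_bigr => i _; rewrite mxE. Qed.

Lemma sq_delta n (j : 'I_n) : sq (delta_mx j 0 : 'cV[C]_n) = 1.
Proof.
rewrite /sq (bigD1 j) //= big1 => [|i hij]; rewrite !mxE ?eqxx /=.
  by rewrite expr1n expr0n addr0 addr0.
by rewrite (negbTE hij) /= expr0n addr0.
Qed.

Lemma sq_IN n (N : 'M[C]_n) j :
  \sum_i (Re ((1%:M + N) i j) ^+ 2 + Im ((1%:M + N) i j) ^+ 2)
  = 1 + (2 * Re (N j j) + \sum_i (Re (N i j) ^+ 2 + Im (N i j) ^+ 2)).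
Proof.
rewrite (bigD1 j) //= [X in _ = 1 + (_ + X)](bigD1 j) //=.
rewrite (eq_bigr (fun i => Re (N i j) ^+ 2 + Im (N i j) ^+ 2)) => [|i hij]; last first.
  by rewrite !mxE (negbTE hij) mulr0n add0r.
rewrite !mxE eqxx mulr1n raddfD [Im _]raddfD /=.
ring.
Qed.

Lemma q_ge0 (z : C) : 0 <= Re z ^+ 2 + Im z ^+ 2.
Proof. by rewrite addr_ge0 // sqr_ge0. Qed.

Lemma q_gt0 (z : C) : z != 0 -> 0 < Re z ^+ 2 + Im z ^+ 2.
Proof.
move=> hz; rewrite -ltcR add_Re2_Im2.
by rewrite exprn_gt0 // normr_gt0.
Qed.

Lemma Re_tr_ge0 n (A B : 'M[C]_n) : psd A -> psd B ->
  0 <= \sum_j Re ((A *m B) j j).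
Proof.
move=> hA hB; have := @tr_psd n A B hA hB; rewrite lecE => /andP[_].
by rewrite /mxtrace raddf_sum.
Qed.

End S.

Theorem proposition3p2 (R : realType) (n : nat) (A C : 'M[R[i]]_n) :
  (0 < n)%N -> psd A -> psd C ->
  1 <= spnorm (1%:M + A *m C) /\
  (spnorm (1%:M + A *m C) = 1 <-> A *m C = 0).
Proof.
move=> n0 hA hC.
set N := A *m C; set M := 1%:M + N.
set S := ([set vnorm (M *m x) | x in [set x : 'cV[R[i]]_n | vnorm x <= 1]])%classic.
have hS : has_ubound S.
  have [K hK] := @bounded R n M.
  by exists K => y [x hx <-]; apply: hK.
pose g j := 2 * complex.Re (N j j) +
  \sum_i (complex.Re (N i j) ^+ 2 + complex.Im (N i j) ^+ 2).
have hvj j : vnorm (M *m delta_mx j 0) = Num.sqrt (1 + g j).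
  by rewrite vnormE sq_col sq_IN.
have hSj j : vnorm (M *m delta_mx j 0) <= spnorm M.
  apply: ub_le_sup => //; exists (delta_mx j 0) => //=.
  by rewrite vnormE sq_delta sqrtr1.
have hsum : \sum_j g j =
   2 * (\sum_j complex.Re (N j j)) +
   \sum_j \sum_i (complex.Re (N i j) ^+ 2 + complex.Im (N i j) ^+ 2).
  by rewrite big_split /= mulr_sumr.
have hRe := @Re_tr_ge0 R n A C hA hC.
have hQ : 0 <= \sum_j \sum_i (complex.Re (N i j) ^+ 2 + complex.Im (N i j) ^+ 2).
  by apply: sumr_ge0 => j _; apply: sumr_ge0 => i _; apply: q_ge0.
have part1 : 1 <= spnorm M.
  have [/existsP [j hj]|] := boolP [exists j, 0 <= g j].
    apply: le_trans (hSj j); rewrite hvj -[X in X <= _]sqrtr1.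
    by rewrite ler_sqrt ?lerDl // addr_ge0.
  rewrite negb_exists => /forallP hneg; exfalso.
  pose j0 := Ordinal n0.
  have hlt j : g j < 0 by rewrite ltNge; apply: hneg.
  have : \sum_j g j < 0.
    rewrite (bigD1 j0) //=.
    have : \sum_(j | j != j0) g j <= 0.
      by apply: sumr_le0 => j _; apply: ltW.
    have := hlt j0; lra.
  rewrite hsum; lra.
split => //; split; last first.
  move=> hN; apply: le_anti; rewrite part1 andbT.
  apply: ge_sup.
    by exists (vnorm (M *m delta_mx (Ordinal n0) 0)); exists (delta_mx (Ordinal n0) 0) => //=;
       rewrite vnormE sq_delta sqrtr1.
  move=> y [x hx <-]; rewrite /M -/N hN addr0 mul1mx; exact: hx.
move=> hM; apply/eqP; apply: contraT => hN.
have [i0 [j0 hij]] : exists i0 j0, N i0 j0 != 0.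
  case: (boolP [exists i, exists j, N i j != 0]) => [/existsP[i /existsP[j h]]|].
    by exists i, j.
  rewrite negb_exists => /forallP h; exfalso; move/negP: hN; apply.
  apply/eqP/matrixP => i j; rewrite [RHS]mxE; move: (h i).
  by rewrite negb_exists => /forallP /(_ j); rewrite negbK => /eqP.
have hQ' : 0 < \sum_j \sum_i (complex.Re (N i j) ^+ 2 + complex.Im (N i j) ^+ 2).
  rewrite (bigD1 j0) //= (bigD1 i0) //=.
  have h1 := @q_gt0 R _ hij.
  have h2 : 0 <= \sum_(i | i != i0) (complex.Re (N i j0) ^+ 2 + complex.Im (N i j0) ^+ 2).
    by apply: sumr_ge0 => i _; apply: q_ge0.
  have h3 : 0 <= \sum_(j | j != j0) \sum_i (complex.Re (N i j) ^+ 2 + complex.Im (N i j) ^+ 2).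
    by apply: sumr_ge0 => j _; apply: sumr_ge0 => i _; apply: q_ge0.
  lra.
have [/existsP [j hj]|] := boolP [exists j, 0 < g j].
  have : 1 < spnorm M.
    apply: lt_le_trans (hSj j); rewrite hvj -[X in X < _]sqrtr1.
    by rewrite ltr_sqrt ?ltrDl // addr_gt0.
  by rewrite hM ltxx.
rewrite negb_exists => /forallP hneg.
have : \sum_j g j <= 0.
  by apply: sumr_le0 => j _; rewrite leNgt; apply: hneg.
rewrite hsum; lra.
Qed.
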